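(* Consider the two-stage cooperative cellular/D2D recovery model described in the context, with lossless links in the second stage, and suppose the algorithm NCMI-Instant (described in the context) is used. Then its packet completion time $T$ satisfies \[ T \leq \left\lceil \min\Big(\max \big(\tfrac{M}{2},|\mathcal{M}_c|\big),\ \max\big(|\mathcal{M}_c|,\tfrac{1}{3}\big(2 \min_{n \in \mathcal{N}} |\mathcal{W}_n|+|\mathcal{M}_d|\big), \tfrac{1}{2}\big(\min_{n \in \mathcal{N}} |\mathcal{W}_n|+|\mathcal{M}_d|\big)\big)\Big) \right\rceil . \]
   Context: Model: a set $\mathcal{N}$ of $N\ge 2$ cooperating mobile devices want a common finite set $\mathcal{M}$ of packets, $M=|\mathcal{M}|$. After a lossy first-stage cellular broadcast, device $n$ holds its Has set $\mathcal{H}_n\subseteq\mathcal{M}$ and misses its Wants set $\mathcal{W}_n=\mathcal{M}\setminus\mathcal{H}_n$; every packet of $\mathcal{M}$ is wanted by at least one device. In the second stage time is slotted; in each slot the source (holding all packets) may broadcast one coded packet over cellular links to all devices and simultaneously one device may broadcast over D2D links to all other devices one coded packet composed only of packets it holds. The packet completion time $T$ is the number of second-stage slots until every device has decoded all packets of its Wants set. Second-stage links are lossless. Grouping (Algorithm 1): process $p_1,\dots,p_M$ in order; for $p_m$ form a length-$N$ vector $v_m$ with $v_m[n]=p_m$ if $p_m\in\mathcal{W}_n$, else NULL. If a previously formed vector $v_{m'}$ has $v_{m'}[n]=\mathrm{NULL}$ for all $n$ with $v_m[n]=p_m$, replace $v_{m'}$ by $v_{m'}+v_m$ (entrywise, $p+\mathrm{NULL}=p$)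 and discard $v_m$. Each final vector gives an instantly decodable coded packet, the XOR of its distinct non-NULL entries. $\mathcal{M}_c$: coded packets from vectors whose entries are all equal and non-NULL (packets wanted by all devices); $\mathcal{M}_d$: from vectors with at least one NULL entry (sendable in one D2D slot by a device $x$ with $v[x]=\mathrm{NULL}$); $\mathcal{M}_l$: from the remaining vectors (no NULL, at least two distinct entries), each of which is sent over D2D by splitting it into two parts each held by some device (two D2D slots). NCMI-Instant (lossless): compute $\mathcal{M}_c,\mathcal{M}_l,\mathcal{M}_d$ once. In each slot the source sends a not-yet-sent packet from $\mathcal{M}_c$ if any remain, else from $\mathcal{M}_l$, else from $\mathcal{M}_d$; simultaneously a device sends a not-yet-sent packet of $\mathcal{M}_d$ if any remain, and otherwise one part of a not-yet-sent packet of $\mathcal{M}_l$. Each coded packet is sent once (across both interfaces). *)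

(* Defs.v *)
From mathcomp Require Import all_boot all_order all_algebra.
Set Implicit Arguments. Unset Strict Implicit. Unset Printing Implicit Defensive.

Section NCMI.
Variables (N M : nat).

(* Devices are 'I_N, packets p_1..p_M are 'I_M (in their natural order).
   A Has-set assignment is H : 'I_N -> {set 'I_M}; Wants set W_n = M \ H_n. *)
Definition Wants (H : 'I_N -> {set 'I_M}) (n : 'I_N) : {set 'I_M} := ~: H n.

Definition pvec := {ffun 'I_N -> option 'I_M}.

Definition vec_of (H : 'I_N -> {set 'I_M}) (m : 'I_M) : pvec :=
  [ffun n => if m \in Wants H n then Some m else None].

Definition mergeable (u v : pvec) : bool :=
  [forall n, (v n != None) ==> (u n == None)].

Definition vmerge (u v : pvec) : pvec :=
  [ffun n => if u n is Some p then Some p else v n].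

Fixpoint insert_vec (v : pvec) (acc : seq pvec) : seq pvec :=
  match acc with
  | [::] => [:: v]
  | u :: acc' => if mergeable u v then vmerge u v :: acc' else u :: insert_vec v acc'
  end.

Definition grouping (H : 'I_N -> {set 'I_M}) : seq pvec :=
  foldl (fun acc m => insert_vec (vec_of H m) acc) [::] (enum 'I_M).

Definition is_c (u : pvec) : bool := [exists p : 'I_M, [forall n, u n == Some p]].
Definition is_d (u : pvec) : bool := [exists n, u n == None].
Definition is_l (u : pvec) : bool := ~~ is_c u && ~~ is_d u.

Definition card_Mc H := count is_c (grouping H).
Definition card_Md H := count is_d (grouping H).
Definition card_Ml H := count is_l (grouping H).

(* min_{n} |W_n| (M is a neutral upper bound since |W_n| <= M and N >= 1). *)
Definition min_wants (H : 'I_N -> {set 'I_M}) : nat :=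
  \big[minn/M]_(n < N) #|Wants H n|.

End NCMI.

(* NCMI-Instant schedule, on the numbers of not-yet-sent coded packets.
   State: (c, l, h, d) = remaining unsent packets of M_c, remaining Ml packets
   of which no part has been sent, h = 1 iff one Ml packet has exactly one of
   its two parts sent over D2D, remaining unsent packets of M_d. *)
Record sched_state := SState { rc : nat; rl : nat; rh : bool; rd : nat }.

Definition slot (s : sched_state) : sched_state :=
  let: SState c l h d := s in
  (* cellular (source) transmission *)
  let: (c1, l1, d1) :=
     if 0 < c then (c.-1, l, d)
     else if 0 < l then (c, l.-1, d)
     else if 0 < d then (c, l, d.-1)
     else (c, l, d) in
  (* D2D transmission *)
  if 0 < d1 then SState c1 l1 h d1.-1
  else if h then SState c1 l1 false d1
  else if 0 < l1 then SState c1 l1.-1 true d1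
  else SState c1 l1 h d1.

Definition finished (s : sched_state) : bool :=
  [&& rc s == 0, rl s == 0, ~~ rh s & rd s == 0].

Definition init_state (c l d : nat) : sched_state := SState c l false d.

Definition is_completion_time (c l d T : nat) : Prop :=
  finished (iter T slot (init_state c l d)) /\
  forall t, t < T -> ~~ finished (iter t slot (init_state c l d)).

(* Main.v *)
Require Import Defs.
From mathcomp Require Import all_boot all_order all_algebra zify.
Import Order.TTheory GRing.Theory Num.Theory.

Definition F (s : sched_state) : nat :=
  maxn (maxn (rc s) (rh s))
       (maxn ((2 * rc s + 2 * rl s + rd s + rh s + 2) %/ 3)
             ((rc s + rl s + rd s + rh s + 1) %/ 2)).

Lemma F_slot s : ~~ finished s -> F (slot s) = (F s).-1.
Proof.
case: s => [[|c] [|[|l]] [] [|[|d]]]; rewrite /finished /slot /F /= => // _; lia.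
Qed.

Lemma F_fin s : finished s -> F s = 0 /\ slot s = s.
Proof.
case: s => [[|c] [|l] [] [|d]]; rewrite /finished /slot /F /= => //.
Qed.

Lemma fin_F s : F s = 0 -> finished s.
Proof.
case: s => [c l h d]; rewrite /finished /F /=. case: h => /=; lia.
Qed.

Lemma F_iter s t : F (iter t slot s) = F s - t.
Proof.
elim: t => [|t IH]; first by rewrite subn0.
rewrite iterS; case: (boolP (finished (iter t slot s))) => Hf.
  by have [H1 H2] := F_fin _ Hf; rewrite H2 H1; move: IH; rewrite H1; lia.
by rewrite F_slot // IH; lia.
Qed.

Lemma completion c l d : is_completion_time c l d (F (init_state c l d)).
Proof.
split.
  by apply: fin_F; rewrite F_iter subnn.
move=> t Ht; apply/negP => Hf; have [H0 _] := F_fin _ Hf.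
by move: H0; rewrite F_iter; lia.
Qed.

Lemma count_enumW (M : nat) (W : {set 'I_M}) : count (mem W) (enum 'I_M) = #|W|.
Proof. by rewrite enumT cardE /enum_mem size_filter. Qed.

Definition nn {N M : nat} (n : 'I_N) (u : pvec N M) : bool := u n != None.

Lemma insert_count {N M : nat} (v : pvec N M) acc n :
  count (nn n) (insert_vec v acc) = count (nn n) acc + nn n v.
Proof.
elim: acc => [|u acc IH] /=; first by rewrite addn0.
case: ifP => Hm /=.
  rewrite /nn ffunE; move/forallP: Hm => /(_ n).
  by case: (u n) => [p|] /=; case: (v n) => [q|] //=; lia.
by rewrite IH addnA.
Qed.

Lemma group_count {N M : nat} (H : 'I_N -> {set 'I_M}) n :
  count (nn n) (grouping H) = #|Wants H n|.
Proof.
rewrite /grouping -count_enumW.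
have gen : forall s acc, count (nn n) (foldl (fun acc m => insert_vec (vec_of H m) acc) acc s)
   = count (nn n) acc + count (mem (Wants H n)) s.
  elim=> [|m s IH] acc /=; first by rewrite addn0.
  rewrite IH insert_count /nn /vec_of ffunE.
  by case: (m \in Wants H n) => /=; lia.
by rewrite gen.
Qed.

Definition weight {N M : nat} (u : pvec N M) : nat :=
  #|[set p : 'I_M | [exists n, u n == Some p]]|.

Lemma weight_merge {N M : nat} (u v : pvec N M) :
  weight (vmerge u v) <= weight u + weight v.
Proof.
rewrite /weight; set A := [set p | _]; set B := [set p | _]; set C := [set p | _].
apply: (@leq_trans #|B :|: C|); last by rewrite cardsU; lia.
apply: subset_leq_card; apply/subsetP => p; rewrite !inE.
case/existsP => n /eqP; rewrite ffunE => Hn; apply/orP.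
move: Hn; case E: (u n) => [q|] Hn.
  by left; apply/existsP; exists n; rewrite E Hn.
by right; apply/existsP; exists n; rewrite Hn.
Qed.

Definition nonempty {N M : nat} (u : pvec N M) : bool := [exists n, u n != None].

Lemma insert_weight {N M : nat} (v : pvec N M) acc :
  sumn (map weight (insert_vec v acc)) <= sumn (map weight acc) + weight v.
Proof.
elim: acc => [|u acc IH] /=; first by rewrite addn0.
case: ifP => Hm /=.
  by have := weight_merge u v; lia.
by move: IH; lia.
Qed.

Lemma insert_nonempty {N M : nat} (v : pvec N M) acc :
  nonempty v -> all nonempty acc -> all nonempty (insert_vec v acc).
Proof.
move=> Hv; elim: acc => [|u acc IH] /=; first by rewrite Hv.
case/andP => Hu Ha; case: ifP => Hm /=.
  rewrite Ha andbT; case/existsP: Hu => n Hn; apply/existsP; exists n.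
  by rewrite ffunE; move: Hn; case: (u n).
by rewrite Hu IH.
Qed.

Lemma weight_vec {N M : nat} (H : 'I_N -> {set 'I_M}) m : weight (vec_of H m) <= 1.
Proof.
rewrite /weight -(cards1 m); apply: subset_leq_card; apply/subsetP => p.
rewrite !inE; case/existsP => n; rewrite ffunE; case: ifP => // _.
by move/eqP => [->].
Qed.

Lemma group_weight {N M : nat} (H : 'I_N -> {set 'I_M}) :
  sumn (map weight (grouping H)) <= M.
Proof.
rewrite /grouping.
have gen : forall s acc, sumn (map weight (foldl (fun acc m => insert_vec (vec_of H m) acc) acc s))
   <= sumn (map weight acc) + size s.
  elim=> [|m s IH] acc /=; first by rewrite addn0.
  apply: leq_trans (IH _) _.
  have := insert_weight (vec_of H m) acc; have := weight_vec H m; lia.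
by apply: leq_trans (gen _ [::]) _; rewrite size_enum_ord.
Qed.

Lemma group_nonempty {N M : nat} (H : 'I_N -> {set 'I_M}) :
  (forall m : 'I_M, exists n : 'I_N, m \in Wants H n) ->
  all nonempty (grouping H).
Proof.
move=> HW; rewrite /grouping.
have gen : forall s acc, all nonempty acc ->
   all nonempty (foldl (fun acc m => insert_vec (vec_of H m) acc) acc s).
  elim=> [|m s IH] acc //= Ha; apply: IH; apply: insert_nonempty => //.
  have [n Hn] := HW m; apply/existsP; exists n; by rewrite ffunE Hn.
exact: gen.
Qed.

Lemma c_not_d {N M : nat} {u : pvec N M} : is_c u -> ~~ is_d u.
Proof.
case/existsP => p /forallP Hp; apply/negP; case/existsP => n /eqP Hn.
by have := Hp n; rewrite Hn.
Qed.

Lemma vec_bound {N M : nat} {u : pvec N M} :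
  nonempty u -> is_c u + 2 * is_l u + is_d u <= weight u.
Proof.
move=> Hne; case/existsP: (Hne) => n0; case E0: (u n0) => [p|] // _.
have Hp : p \in [set p : 'I_M | [exists n, u n == Some p]].
  by rewrite inE; apply/existsP; exists n0; rewrite E0.
have w1 : 0 < weight u by rewrite /weight card_gt0; apply/set0Pn; exists p.
rewrite /is_l; case Hd: (is_d u).
  by case Hc: (is_c u); [move: (c_not_d Hc); rewrite Hd | rewrite /=; lia].
case Hc: (is_c u) => /=; first by lia.
have : ~~ is_c u by rewrite Hc.
move/existsPn => /(_ p) /forallPn [n Hn].
have : ~~ is_d u by rewrite Hd.
move/existsPn => /(_ n); case E: (u n) => [q|] // _.
have Hq : q \in [set p : 'I_M | [exists n, u n == Some p]].
  by rewrite inE; apply/existsP; exists n; rewrite E.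
have qp : p != q by apply: contra Hn; rewrite E => /eqP ->.
have : #|[set p; q]| <= weight u.
  by apply: subset_leq_card; apply/subsetP => x /set2P [] ->.
by rewrite cards2 qp.
Qed.

Lemma list_bound {N M : nat} (s : seq (pvec N M)) : all nonempty s ->
  count (@is_c N M) s + 2 * count (@is_l N M) s + count (@is_d N M) s <= sumn (map weight s).
Proof.
elim: s => [|u s IH] //= /andP [Hu Hs].
have := vec_bound Hu; have := IH Hs; lia.
Qed.

Lemma nn_bound {N M : nat} (s : seq (pvec N M)) n :
  count (@is_c N M) s + count (@is_l N M) s <= count (nn n) s.
Proof.
elim: s => [|u s IH] //=.
suff : is_c u + is_l u <= nn n u by move: IH; lia.
rewrite /nn /is_l; case Hc: (is_c u) => /=.
  have := c_not_d Hc; case E: (u n) => //= /existsPn /(_ n); by rewrite E.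
case E: (u n) => [q|] //=.
  by case: (is_d u).
have : is_d u by apply/existsP; exists n; rewrite E.
by move=> ->.
Qed.

Theorem theorem2 (N M : nat) (H : 'I_N -> {set 'I_M}) :
  2 <= N ->
  (forall m : 'I_M, exists n : 'I_N, m \in Wants H n) ->
  exists T : nat,
    is_completion_time (card_Mc H) (card_Ml H) (card_Md H) T /\
    (T%:Z <= Num.ceil
       (Num.min (Num.max (M%:R / 2) (card_Mc H)%:R)
                (Num.max (card_Mc H)%:R
                   (Num.max ((2 * min_wants H + card_Md H)%:R / 3)
                            ((min_wants H + card_Md H)%:R / 2))) : rat))%R.
Proof.
move=> _ HW.
have hM : card_Mc H + 2 * card_Ml H + card_Md H <= M.
  apply: leq_trans (group_weight H); exact: (list_bound _ (group_nonempty H HW)).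
have hW : card_Mc H + card_Ml H <= min_wants H.
  rewrite /min_wants; apply: (big_ind (fun x => card_Mc H + card_Ml H <= x)).
  - by move: hM; lia.
  - by move=> x y Hx Hy; rewrite leq_min Hx Hy.
  - move=> n _; rewrite -group_count; exact: nn_bound.
move: hM hW; set c := card_Mc H; set l := card_Ml H; set d := card_Md H;
  set w := min_wants H => hM hW.
exists (F (init_state c l d)); split; first exact: completion.
have HT : F (init_state c l d) = maxn (maxn c false)
   (maxn ((2 * c + 2 * l + d + false + 2) %/ 3) ((c + l + d + false + 1) %/ 2)) by [].
have x0 : ((0 : rat) <= Num.min (Num.max (M%:R / 2) c%:R)
                (Num.max c%:R (Num.max ((2 * w + d)%:R / 3) ((w + d)%:R / 2))))%R.
  by rewrite le_min !le_max !ler0n !orbT.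
case ET: (F (init_state c l d)) => [|n].
  by rewrite ceil_ge0; apply: lt_le_trans x0.
have H1 : (n < c \/ 2 * n < M)%N by move: HT hM hW; rewrite ET; lia.
have H2 : (n < c \/ 3 * n < 2 * w + d \/ 2 * n < w + d)%N by move: HT hM hW; rewrite ET; lia.
suff : (n%:Z < Num.ceil (Num.min (Num.max (M%:R / 2) c%:R)
                (Num.max c%:R (Num.max ((2 * w + d)%:R / 3) ((w + d)%:R / 2))) : rat))%R.
  by lia.
rewrite ceil_gt_int -pmulrn lt_min !lt_max.
have k1 a : (n < a)%N -> (n%:R < a%:R :> rat)%R by rewrite ltr_nat.
have k2 a : (2 * n < a)%N -> (n%:R < a%:R / 2 :> rat)%R.
  by move=> ha; rewrite ltr_pdivlMr // -natrM ltr_nat; lia.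
have k3 a : (3 * n < a)%N -> (n%:R < a%:R / 3 :> rat)%R.
  by move=> ha; rewrite ltr_pdivlMr // -natrM ltr_nat; lia.
apply/andP; split.
  by case: H1 => h; [rewrite k1 ?orbT | rewrite k2].
by case: H2 => [h|[h|h]]; [rewrite k1 | rewrite k3 ?orbT | rewrite k2 ?orbT].
Qed.
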